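(* With notation as in the context (type $E_7$), $\Gamma_7^+$ is exactly the set of $abc\in V$ such that exactly one of $a=0$, $b=0$, $c=0$ holds.
   Context: Let $F=\{0,1,2,3\}$ be the group $\mathbb{Z}/2\times\mathbb{Z}/2$ with operation $\oplus$ (binary addition without carry) and symplectic form $(a|a')=0$ if $a=0$, $a'=0$ or $a=a'$, and $1$ otherwise. Let $V=F^3$ (elements written $abc$), with coordinatewise $\oplus$ and form $(abc|a'b'c')=(a|a')+(b|b')+(c|c')\in\mathbb{Z}/2$. Let $\Delta$ be the $E_7$ root system with simple roots $\alpha_1,\dots,\alpha_7$, $\langle\alpha_i,\alpha_i\rangle=2$, $\langle\alpha_i,\alpha_j\rangle=-1$ for $\{i,j\}\in\{\{1,3\},\{3,4\},\{4,5\},\{5,6\},\{6,7\},\{2,4\}\}$, $0$ otherwise; $\Lambda=\bigoplus\mathbb{Z}\alpha_i$, $\Delta^+$ the positive roots. Let $f:\Lambda\to V$ be the homomorphism with $f(\alpha_1)=100$, $f(\alpha_2)=030$, $f(\alpha_3)=300$, $f(\alpha_4)=111$, $f(\alpha_5)=003$, $f(\alpha_6)=001$, $f(\alpha_7)=033$. Let $\Delta_7^+$ be the set of positive roots $\beta=\sum\beta^i\alpha_i$ with $\beta^7\neq0$, and $\Gamma_7^+=f(\Delta_7^+)$. *)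

(* Defs.v *)
From mathcomp Require Import all_boot all_order all_algebra.
Set Implicit Arguments. Unset Strict Implicit. Unset Printing Implicit Defensive.
Import Order.TTheory GRing.Theory Num.Theory.
Local Open Scope ring_scope.

(* F = Z/2 x Z/2 encoded as {0,1,2,3}, with (+) = bitwise xor. *)
Definition F := 'I_4.
Definition Fxor (a b : F) : F := inord (Nat.lxor a b).
Definition F0 : F := inord 0.

Definition V := (F * F * F)%type.
Definition Vxor (u v : V) : V :=
  (Fxor u.1.1 v.1.1, Fxor u.1.2 v.1.2, Fxor u.2 v.2).
Definition V0 : V := (F0, F0, F0).
Definition mkV (a b c : nat) : V := (inord a, inord b, inord c).

(* Root lattice Lambda = Z^7 in the basis of simple roots; index i : 'I_7
   stands for the paper's alpha_(i+1). *)
Definition Lam := {ffun 'I_7 -> int}.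
Definition alpha (i : 'I_7) : Lam := [ffun j => (i == j)%:Z].

(* E7 Cartan matrix <alpha_i, alpha_j> with the paper's (1-based) edges. *)
Definition e7_edge (p q : nat) : bool :=
  [|| (p, q) == (1, 3), (p, q) == (3, 4), (p, q) == (4, 5), (p, q) == (5, 6),
      (p, q) == (6, 7) | (p, q) == (2, 4)]%N.
Definition cartan (i j : 'I_7) : int :=
  if i == j then 2 else if e7_edge i.+1 j.+1 || e7_edge j.+1 i.+1 then -1 else 0.

Definition form (x y : Lam) : int :=
  \sum_(i < 7) \sum_(j < 7) x i * y j * cartan i j.

Definition refl (i : 'I_7) (x : Lam) : Lam :=
  [ffun j => x j - form x (alpha i) * alpha i j].

Inductive is_root : Lam -> Prop :=
| root_simple i : is_root (alpha i)
| root_refl i x : is_root x -> is_root (refl i x).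

Definition is_pos (x : Lam) : bool := [forall i, 0 <= x i].
Definition in_Delta7pos (x : Lam) : Prop :=
  is_root x /\ is_pos x /\ x (inord 6) != 0.

Definition f_alpha (i : 'I_7) : V :=
  match nat_of_ord i with
  | 0 => mkV 1 0 0
  | 1 => mkV 0 3 0
  | 2 => mkV 3 0 0
  | 3 => mkV 1 1 1
  | 4 => mkV 0 0 3
  | 5 => mkV 0 0 1
  | _ => mkV 0 3 3
  end%N.

(* The homomorphism f : Lambda -> V.  Since V has exponent 2,
   f(sum b_i alpha_i) = (+)_{i : b_i odd} f(alpha_i). *)
Definition f (x : Lam) : V :=
  foldr Vxor V0 [seq (if odd `|x i|%N then f_alpha i else V0) | i <- enum 'I_7].

Definition exactly_one_zero (v : V) : bool :=
  (((v.1.1 == F0) : nat) + ((v.1.2 == F0) : nat) + ((v.2 == F0) : nat) == 1)%N.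

(* Main.v *)
Require Import Defs.
From mathcomp Require Import all_boot all_order all_algebra.
From mathcomp Require Import ring.
Set Implicit Arguments. Unset Strict Implicit. Unset Printing Implicit Defensive.
Import Order.TTheory GRing.Theory Num.Theory.
Local Open Scope ring_scope.

Definition R : seq (seq int) := [::
 [:: 1; 0; 0; 0; 0; 0; 0];
 [:: 0; 1; 0; 0; 0; 0; 0];
 [:: 0; 0; 1; 0; 0; 0; 0];
 [:: 0; 0; 0; 1; 0; 0; 0];
 [:: 0; 0; 0; 0; 1; 0; 0];
 [:: 0; 0; 0; 0; 0; 1; 0];
 [:: 0; 0; 0; 0; 0; 0; 1];
 [:: (-1); 0; 0; 0; 0; 0; 0];
 [:: 1; 0; 1; 0; 0; 0; 0];
 [:: 0; (-1); 0; 0; 0; 0; 0];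
 [:: 0; 1; 0; 1; 0; 0; 0];
 [:: 0; 0; (-1); 0; 0; 0; 0];
 [:: 0; 0; 1; 1; 0; 0; 0];
 [:: 0; 0; 0; (-1); 0; 0; 0];
 [:: 0; 0; 0; 1; 1; 0; 0];
 [:: 0; 0; 0; 0; (-1); 0; 0];
 [:: 0; 0; 0; 0; 1; 1; 0];
 [:: 0; 0; 0; 0; 0; (-1); 0];
 [:: 0; 0; 0; 0; 0; 1; 1];
 [:: 0; 0; 0; 0; 0; 0; (-1)];
 [:: (-1); 0; (-1); 0; 0; 0; 0];
 [:: 1; 0; 1; 1; 0; 0; 0];
 [:: 0; (-1); 0; (-1); 0; 0; 0];
 [:: 0; 1; 1; 1; 0; 0; 0];
 [:: 0; 1; 0; 1; 1; 0; 0];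
 [:: 0; 0; (-1); (-1); 0; 0; 0];
 [:: 0; 0; 1; 1; 1; 0; 0];
 [:: 0; 0; 0; (-1); (-1); 0; 0];
 [:: 0; 0; 0; 1; 1; 1; 0];
 [:: 0; 0; 0; 0; (-1); (-1); 0];
 [:: 0; 0; 0; 0; 1; 1; 1];
 [:: 0; 0; 0; 0; 0; (-1); (-1)];
 [:: (-1); 0; (-1); (-1); 0; 0; 0];
 [:: 1; 1; 1; 1; 0; 0; 0];
 [:: 1; 0; 1; 1; 1; 0; 0];
 [:: 0; (-1); (-1); (-1); 0; 0; 0];
 [:: 0; (-1); 0; (-1); (-1); 0; 0];
 [:: 0; 1; 1; 1; 1; 0; 0];
 [:: 0; 1; 0; 1; 1; 1; 0];
 [:: 0; 0; (-1); (-1); (-1); 0; 0];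
 [:: 0; 0; 1; 1; 1; 1; 0];
 [:: 0; 0; 0; (-1); (-1); (-1); 0];
 [:: 0; 0; 0; 1; 1; 1; 1];
 [:: 0; 0; 0; 0; (-1); (-1); (-1)];
 [:: (-1); (-1); (-1); (-1); 0; 0; 0];
 [:: (-1); 0; (-1); (-1); (-1); 0; 0];
 [:: 1; 1; 1; 1; 1; 0; 0];
 [:: 1; 0; 1; 1; 1; 1; 0];
 [:: 0; (-1); (-1); (-1); (-1); 0; 0];
 [:: 0; (-1); 0; (-1); (-1); (-1); 0];
 [:: 0; 1; 1; 2; 1; 0; 0];
 [:: 0; 1; 1; 1; 1; 1; 0];
 [:: 0; 1; 0; 1; 1; 1; 1];
 [:: 0; 0; (-1); (-1); (-1); (-1); 0];
 [:: 0; 0; 1; 1; 1; 1; 1];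
 [:: 0; 0; 0; (-1); (-1); (-1); (-1)];
 [:: (-1); (-1); (-1); (-1); (-1); 0; 0];
 [:: (-1); 0; (-1); (-1); (-1); (-1); 0];
 [:: 1; 1; 1; 2; 1; 0; 0];
 [:: 1; 1; 1; 1; 1; 1; 0];
 [:: 1; 0; 1; 1; 1; 1; 1];
 [:: 0; (-1); (-1); (-2); (-1); 0; 0];
 [:: 0; (-1); (-1); (-1); (-1); (-1); 0];
 [:: 0; (-1); 0; (-1); (-1); (-1); (-1)];
 [:: 0; 1; 1; 2; 1; 1; 0];
 [:: 0; 1; 1; 1; 1; 1; 1];
 [:: 0; 0; (-1); (-1); (-1); (-1); (-1)];
 [:: (-1); (-1); (-1); (-2); (-1); 0; 0];
 [:: (-1); (-1); (-1); (-1); (-1); (-1); 0];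
 [:: (-1); 0; (-1); (-1); (-1); (-1); (-1)];
 [:: 1; 1; 2; 2; 1; 0; 0];
 [:: 1; 1; 1; 2; 1; 1; 0];
 [:: 1; 1; 1; 1; 1; 1; 1];
 [:: 0; (-1); (-1); (-2); (-1); (-1); 0];
 [:: 0; (-1); (-1); (-1); (-1); (-1); (-1)];
 [:: 0; 1; 1; 2; 2; 1; 0];
 [:: 0; 1; 1; 2; 1; 1; 1];
 [:: (-1); (-1); (-2); (-2); (-1); 0; 0];
 [:: (-1); (-1); (-1); (-2); (-1); (-1); 0];
 [:: (-1); (-1); (-1); (-1); (-1); (-1); (-1)];
 [:: 1; 1; 2; 2; 1; 1; 0];
 [:: 1; 1; 1; 2; 2; 1; 0];
 [:: 1; 1; 1; 2; 1; 1; 1];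
 [:: 0; (-1); (-1); (-2); (-2); (-1); 0];
 [:: 0; (-1); (-1); (-2); (-1); (-1); (-1)];
 [:: 0; 1; 1; 2; 2; 1; 1];
 [:: (-1); (-1); (-2); (-2); (-1); (-1); 0];
 [:: (-1); (-1); (-1); (-2); (-2); (-1); 0];
 [:: (-1); (-1); (-1); (-2); (-1); (-1); (-1)];
 [:: 1; 1; 2; 2; 2; 1; 0];
 [:: 1; 1; 2; 2; 1; 1; 1];
 [:: 1; 1; 1; 2; 2; 1; 1];
 [:: 0; (-1); (-1); (-2); (-2); (-1); (-1)];
 [:: 0; 1; 1; 2; 2; 2; 1];
 [:: (-1); (-1); (-2); (-2); (-2); (-1); 0];
 [:: (-1); (-1); (-2); (-2); (-1); (-1); (-1)];
 [:: (-1); (-1); (-1); (-2); (-2); (-1); (-1)];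
 [:: 1; 1; 2; 3; 2; 1; 0];
 [:: 1; 1; 2; 2; 2; 1; 1];
 [:: 1; 1; 1; 2; 2; 2; 1];
 [:: 0; (-1); (-1); (-2); (-2); (-2); (-1)];
 [:: (-1); (-1); (-2); (-3); (-2); (-1); 0];
 [:: (-1); (-1); (-2); (-2); (-2); (-1); (-1)];
 [:: (-1); (-1); (-1); (-2); (-2); (-2); (-1)];
 [:: 1; 2; 2; 3; 2; 1; 0];
 [:: 1; 1; 2; 3; 2; 1; 1];
 [:: 1; 1; 2; 2; 2; 2; 1];
 [:: (-1); (-2); (-2); (-3); (-2); (-1); 0];
 [:: (-1); (-1); (-2); (-3); (-2); (-1); (-1)];
 [:: (-1); (-1); (-2); (-2); (-2); (-2); (-1)];
 [:: 1; 2; 2; 3; 2; 1; 1];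
 [:: 1; 1; 2; 3; 2; 2; 1];
 [:: (-1); (-2); (-2); (-3); (-2); (-1); (-1)];
 [:: (-1); (-1); (-2); (-3); (-2); (-2); (-1)];
 [:: 1; 2; 2; 3; 2; 2; 1];
 [:: 1; 1; 2; 3; 3; 2; 1];
 [:: (-1); (-2); (-2); (-3); (-2); (-2); (-1)];
 [:: (-1); (-1); (-2); (-3); (-3); (-2); (-1)];
 [:: 1; 2; 2; 3; 3; 2; 1];
 [:: (-1); (-2); (-2); (-3); (-3); (-2); (-1)];
 [:: 1; 2; 2; 4; 3; 2; 1];
 [:: (-1); (-2); (-2); (-4); (-3); (-2); (-1)];
 [:: 1; 2; 3; 4; 3; 2; 1];
 [:: (-1); (-2); (-3); (-4); (-3); (-2); (-1)];
 [:: 2; 2; 3; 4; 3; 2; 1];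
 [:: (-2); (-2); (-3); (-4); (-3); (-2); (-1)]].

Definition P : seq (nat * seq nat) := [::
 (6, [:: ]);
 (5, [:: 6]);
 (4, [:: 6; 5]);
 (3, [:: 6; 5; 4]);
 (1, [:: 6; 5; 4; 3]);
 (2, [:: 6; 5; 4; 3]);
 (0, [:: 6; 5; 4; 3; 2]);
 (1, [:: 6; 5; 4; 2; 3]);
 (0, [:: 6; 5; 4; 1; 3; 2]);
 (1, [:: 6; 5; 3; 4; 2; 3]);
 (0, [:: 6; 5; 3; 4; 1; 3; 2]);
 (1, [:: 6; 4; 5; 3; 4; 2; 3]);
 (0, [:: 6; 5; 2; 3; 4; 1; 3; 2]);
 (0, [:: 6; 4; 5; 3; 4; 1; 3; 2]);
 (1, [:: 5; 6; 4; 5; 3; 4; 2; 3]);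
 (0, [:: 6; 4; 5; 2; 3; 4; 1; 3; 2]);
 (0, [:: 5; 6; 4; 5; 3; 4; 1; 3; 2]);
 (0, [:: 6; 3; 4; 5; 2; 3; 4; 1; 3; 2]);
 (0, [:: 5; 6; 4; 5; 2; 3; 4; 1; 3; 2]);
 (0, [:: 6; 1; 3; 4; 5; 2; 3; 4; 1; 3; 2]);
 (0, [:: 5; 6; 3; 4; 5; 2; 3; 4; 1; 3; 2]);
 (0, [:: 5; 6; 1; 3; 4; 5; 2; 3; 4; 1; 3; 2]);
 (0, [:: 4; 5; 6; 3; 4; 5; 2; 3; 4; 1; 3; 2]);
 (0, [:: 4; 5; 6; 1; 3; 4; 5; 2; 3; 4; 1; 3; 2]);
 (0, [:: 3; 4; 5; 6; 1; 3; 4; 5; 2; 3; 4; 1; 3; 2]);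
 (0, [:: 2; 3; 4; 5; 6; 1; 3; 4; 5; 2; 3; 4; 1; 3; 2]);
 (0, [:: 0; 2; 3; 4; 5; 6; 1; 3; 4; 5; 2; 3; 4; 1; 3; 2])].

Definition cartanN (a b : nat) : int :=
  if a == b then 2 else if e7_edge a.+1 b.+1 || e7_edge b.+1 a.+1 then -1 else 0.

Definition dotL (r : seq int) (m : nat) : int :=
  foldr (fun k acc => nth 0 r k * cartanN k m + acc) 0 (iota 0 7).

Definition reflL (m : nat) (r : seq int) : seq int :=
  [seq nth 0 r k - dotL r m * (k == m)%:Z | k <- iota 0 7].

Definition toL (x : Lam) : seq int := [seq x (inord k) | k <- iota 0 7].

Lemma inord_eqE (a b : nat) : (a < 7)%N -> (b < 7)%N ->
  ((inord a : 'I_7) == inord b) = (a == b).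
Proof. by move=> ha hb; rewrite -val_eqE /= !inordK. Qed.

Lemma cartanE (a b : nat) : (a < 7)%N -> (b < 7)%N ->
  cartan (inord a) (inord b) = cartanN a b.
Proof. by move=> ha hb; rewrite /cartan /cartanN inord_eqE // !inordK. Qed.

Lemma sum7 (G : 'I_7 -> int) :
  \sum_(a < 7) G a = foldr (fun k acc => G (inord k) + acc) 0 (iota 0 7).
Proof.
rewrite !big_ord_recl big_ord0 /=.
by do 7! (congr (_ + _); first by congr G; apply/val_inj; rewrite /= inordK).
Qed.

Lemma form_alpha (x : Lam) (i : 'I_7) :
  Defs.form x (alpha i) = \sum_(a < 7) x a * cartan a i.
Proof.
rewrite /Defs.form; apply: eq_bigr => a _.
rewrite (bigD1 i) //= big1 => [|b nb]; rewrite ffunE.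
  by rewrite eqxx mulr1 addr0.
by rewrite eq_sym (negbTE nb) mulr0 mul0r.
Qed.

Lemma toL_refl (x : Lam) (m : nat) : (m < 7)%N ->
  toL (refl (inord m) x) = reflL m (toL x).
Proof.
move=> hm; rewrite /toL /reflL /= !ffunE form_alpha sum7 /dotL /=.
rewrite !inord_eqE // !cartanE //.
do 7! (case: m hm => [|m] hm; first by rewrite /= !mulr1 !mulr0).
by [].
Qed.

Lemma toL_alpha (m : nat) : (m < 7)%N ->
  toL (alpha (inord m)) = [seq (m == k)%:Z | k <- iota 0 7].
Proof. by move=> hm; rewrite /toL /= !ffunE !inord_eqE //. Qed.

Lemma R_closed : all (fun m => all (fun r => reflL m r \in R) R) (iota 0 7).
Proof. by vm_compute. Qed.

Lemma R_alpha : all (fun m => [seq (m == k)%:Z | k <- iota 0 7] \in R) (iota 0 7).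
Proof. by vm_compute. Qed.

Lemma ord7 (i : 'I_7) : i = inord (val i).
Proof. by apply/val_inj; rewrite /= inordK. Qed.

Lemma root_R x : is_root x -> toL x \in R.
Proof.
elim => [[m hm] | [m hm] y _ IH].
  rewrite (_ : Ordinal hm = inord m); last by apply/val_inj; rewrite /= inordK.
  rewrite toL_alpha //.
  by move/allP: R_alpha; apply; rewrite mem_iota.
rewrite (_ : Ordinal hm = inord m); last by apply/val_inj; rewrite /= inordK.
rewrite toL_refl //.
have Hm : m \in iota 0 7 by rewrite mem_iota. exact: (allP (allP R_closed m Hm) _ IH).
Qed.

Lemma pos_toL x : is_pos x = all (fun z => 0 <= z) (toL x).
Proof.
apply/forallP/idP => [H | H i].
  by apply/allP => z /mapP [k _ ->].
apply: (allP H); apply/mapP; exists (val i); first by rewrite mem_iota /=.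
by rewrite inord_val.
Qed.

Definition fL (r : seq int) : V :=
  foldr Vxor V0 [seq (if odd `|nth (0:int) r k|%N then f_alpha (inord k) else V0) | k <- iota 0 7].

Lemma enum7 : enum 'I_7 = [seq inord k | k <- iota 0 7].
Proof.
apply: (inj_map val_inj); rewrite val_enum_ord -map_comp /=.
by rewrite !inordK.
Qed.

Lemma f_toL x : Defs.f x = fL (toL x).
Proof. by rewrite /Defs.f /fL enum7. Qed.

Definition buildL (p : nat * seq nat) : seq int :=
  foldr reflL [seq (p.1 == k)%:Z | k <- iota 0 7] p.2.

Definition build (p : nat * seq nat) : Lam :=
  foldr (fun m y => refl (inord m) y) (alpha (inord p.1)) p.2.

Lemma build_root p : is_root (build p).
Proof. case: p => i0 l; elim: l => [|m l IH] /=; constructor => //. Qed.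

Lemma build_toL p : (p.1 < 7)%N -> all (fun m => m < 7)%N p.2 -> toL (build p) = buildL p.
Proof.
case: p => i0 l /= h0; elim: l => [|m l IH] /=; first by rewrite toL_alpha.
by case/andP => hm hl; rewrite toL_refl // IH.
Qed.

Definition T3 := (nat * nat * nat)%type.
Definition mkV3 (t : T3) : V := mkV t.1.1 t.1.2 t.2.
Definition ok3 (t : T3) : bool := [&& (t.1.1 < 4)%N, (t.1.2 < 4)%N & (t.2 < 4)%N].
Definition xorN (t u : T3) : T3 :=
  (Nat.lxor t.1.1 u.1.1, Nat.lxor t.1.2 u.1.2, Nat.lxor t.2 u.2).
Definition fa (k : nat) : T3 :=
  match k with
  | 0 => (1, 0, 0) | 1 => (0, 3, 0) | 2 => (3, 0, 0) | 3 => (1, 1, 1)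
  | 4 => (0, 0, 3) | 5 => (0, 0, 1) | _ => (0, 3, 3) end%N.
Definition fN (r : seq int) : T3 :=
  foldr xorN (0, 0, 0)%N [seq (if odd `|nth (0:int) r k|%N then fa k else (0, 0, 0)%N) | k <- iota 0 7].
Definition eozN (t : T3) : bool :=
  (((t.1.1 == 0)%N : nat) + ((t.1.2 == 0)%N : nat) + ((t.2 == 0)%N : nat) == 1)%N.

Lemma lxor_lt4 a b : (a < 4)%N -> (b < 4)%N -> (Nat.lxor a b < 4)%N.
Proof.
by case: a => [|[|[|[|a]]]] //; case: b => [|[|[|[|b]]]].
Qed.

Lemma Fxor_inord a b : (a < 4)%N -> (b < 4)%N ->
  Fxor (inord a) (inord b) = inord (Nat.lxor a b).
Proof. by move=> ha hb; rewrite /Fxor !inordK. Qed.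

Lemma xorN_ok t u : ok3 t -> ok3 u -> ok3 (xorN t u).
Proof.
case: t => [[a b] c]; case: u => [[a' b'] c'] /and3P [? ? ?] /and3P [? ? ?].
by apply/and3P; split; apply: lxor_lt4.
Qed.

Lemma Vxor_mkV3 t u : ok3 t -> ok3 u -> Vxor (mkV3 t) (mkV3 u) = mkV3 (xorN t u).
Proof.
case: t => [[a b] c]; case: u => [[a' b'] c'] /and3P [? ? ?] /and3P [? ? ?].
by rewrite /Vxor /mkV3 /mkV /= !Fxor_inord.
Qed.

Lemma foldr_mkV3 (s : seq T3) : all ok3 s ->
  foldr Vxor V0 (map mkV3 s) = mkV3 (foldr xorN (0, 0, 0)%N s) /\ ok3 (foldr xorN (0, 0, 0)%N s).
Proof.
elim: s => [|t s IH] /=; first by [].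
case/andP => ht /IH [-> hs]; split; [exact: Vxor_mkV3 | exact: xorN_ok].
Qed.

Lemma fL_fN r : fL r = mkV3 (fN r).
Proof.
rewrite /fL /fN.
set s := [seq (if odd `|nth (0:int) r k|%N then fa k else (0, 0, 0)%N) | k <- iota 0 7].
have Hs : all ok3 s.
  by rewrite /s all_map; apply/allP => k _ /=; case: ifP => // _; case: k => [|[|[|[|[|[|]]]]]].
rewrite -(proj1 (foldr_mkV3 Hs)) /s -map_comp; congr foldr.
apply/eq_in_map => k; rewrite mem_iota /= => hk.
case: ifP => _ //.
rewrite /f_alpha inordK //.
by do 7! (case: k hk => [|k] hk //).
Qed.

Lemma eoz_mkV3 t : ok3 t -> exactly_one_zero (mkV3 t) = eozN t.
Proof.
case: t => [[a b] c] /and3P [ha hb hc].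
rewrite /exactly_one_zero /eozN /mkV3 /mkV /F0 /=.
have E : forall n, (n < 4)%N -> ((inord n : 'I_4) == inord 0) = (n == 0)%N.
  by move=> n hn; rewrite -val_eqE /= !inordK.
by rewrite !E.
Qed.

Lemma R_check : all (fun r => (all (fun z => 0 <= z) r && (nth 0 r 6 != 0)) ==> eozN (fN r)) R.
Proof. by vm_compute. Qed.

Definition goodP (t : T3) (p : nat * seq nat) : bool :=
  [&& (p.1 < 7)%N, all (fun m => m < 7)%N p.2, all (fun z => 0 <= z) (buildL p),
      nth 0 (buildL p) 6 != 0 & fN (buildL p) == t].

Lemma P_check : all (fun a => all (fun b => all (fun c =>
   eozN (a, b, c) ==> has (goodP (a, b, c)) P) (iota 0 4)) (iota 0 4)) (iota 0 4).
Proof. by vm_compute. Qed.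

Lemma fN_ok r : ok3 (fN r).
Proof.
apply: (proj2 (foldr_mkV3 _)).
by rewrite all_map; apply/allP => k _ /=; case: ifP => // _; case: k => [|[|[|[|[|[|]]]]]].
Qed.

Lemma x6 (x : Lam) : x (inord 6) = nth 0 (toL x) 6.
Proof. by []. Qed.

Theorem mainTheorem6 (v : V) :
  (exists x : Lam, in_Delta7pos x /\ f x = v) <-> exactly_one_zero v.
Proof.
split.
  move=> [x [[hr [hp h6]] <-]].
  have H := allP R_check _ (root_R hr).
  rewrite f_toL fL_fN eoz_mkV3 ?fN_ok //; apply: (implyP H).
  by rewrite -pos_toL hp -x6 h6.
move=> hv.
set t : T3 := (val v.1.1, val v.1.2, val v.2).
have Ev : v = mkV3 t by case: v {hv} @t => [[a b] c]; rewrite /mkV3 /mkV /= !inord_val.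
have Ht : ok3 t by rewrite /ok3 /= !ltn_ord.
have Ha : (v.1.1 : nat) \in iota 0 4 by rewrite mem_iota /=.
have Hb : (v.1.2 : nat) \in iota 0 4 by rewrite mem_iota /=.
have Hc : (v.2 : nat) \in iota 0 4 by rewrite mem_iota /=.
have H := implyP (allP (allP (allP P_check _ Ha) _ Hb) _ Hc).
have hv' : eozN t by rewrite -eoz_mkV3 // -Ev.
have /hasP [p _ /and5P [h1 h2 h3 h4 /eqP h5]] := H hv'.
exists (build p); split; last by rewrite f_toL build_toL // fL_fN h5 -Ev.
split; first exact: build_root.
by rewrite pos_toL x6 build_toL.
Qed.
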